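(* Let $m\ge3$ and consider a hypergraph PIN model on a $t$-uniform hypergraph $\mathcal H=(\mathcal M,\mathcal E)$. Let $\Omega=\{B\subset\mathcal M:1\le|B|\le m-2\}$. The singleton partition $\mathcal S$ is (a) a minimizer of $\Delta$ if and only if $$\frac{(t-1)|\mathcal E|}{m-1}\le\frac{\sum_{e\in\mathcal E}[P_B(e)-1]}{|\mathcal P_B|-1}\quad\text{for all } B\in\Omega;$$ (b) the unique minimizer of $\Delta$ if and only if the same inequalities hold strictly for all $B\in\Omega$.
   Context: Let $\mathcal M=\{1,\dots,m\}$. A hypergraph PIN model on $\mathcal H=(\mathcal M,\mathcal E)$, with $\mathcal E$ a finite multiset of subsets of $\mathcal M$, is defined as follows. Let $\mathcal E^{(n)}$ contain $n$ copies of each element of $\mathcal E$. Independent Bernoulli(1/2) variables $\xi_e$ are attached to the $e\in\mathcal E^{(n)}$, and $X^n_i=(\xi_e:e\in\mathcal E^{(n)},\ i\in e)$. The single-letter source $X_{\mathcal M}$ corresponds to $n=1$. $\mathcal H$ is $t$-uniform if every hyperedge has $t$ elements. Entropies are base 2. $\Delta(\mathcal P)=\frac1{|\mathcal P|-1}[\sum_{A\in\mathcal P}H(X_A)-H(X_{\mathcal M})]$ for partitions with at least 2 cells, where $X_A=(X_i:i\in A)$. $\mathcal S=\{\{1\},\dots,\{m\}\}$. For nonempty $B=\{b_1,\dots,b_{|B|}\}\subsetneq\mathcal M$, $\mathcal P_B=\{B^c,\{b_1\},\dots,\{b_{|B|}\}\}$, and $P_B(e)$ is the number of cells of $\mathcal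 P_B$ that intersect the hyperedge $e$. *)

(* Defs.v *)
From Stdlib Require Import Reals.
From mathcomp Require Import all_boot.
Local Open Scope R_scope.

Definition rsum (s : seq R) : R := foldr Rplus R0 s.

Definition log2 (x : R) : R := (ln x / ln 2).

(* Shannon entropy (base 2) of a random variable f : Om -> V, where Om is a
   finite probability space with the uniform distribution:
   H(f) = sum over values v of f of  - p(v) log2 p(v),  p(v) = P[f = v]. *)
Definition entropy {Om : finType} {V : eqType} (f : Om -> V) : R :=
  rsum [seq (let p := (INR (count (fun w => f w == v) (enum Om)) / INR #|Om|)
             in - (p * log2 p))
       | v <- undup [seq f w | w <- enum Om]].

(* Hypergraph PIN model (single letter, n = 1).  Vertex set M = 'I_m,
   hyperedge multiset E : seq {set 'I_m}; hyperedge number k carries the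
   independent uniform bit w k, for w in the uniform space
   {ffun 'I_(size E) -> bool}. *)
Definition outcome {m : nat} (E : seq {set 'I_m}) := {ffun 'I_(size E) -> bool}.

(* X_i = (xi_e : e in E, i in e), recorded position-wise. *)
Definition Xi {m : nat} (E : seq {set 'I_m}) (i : 'I_m) (w : outcome E)
  : {ffun 'I_(size E) -> option bool} :=
  [ffun k : 'I_(size E) => if i \in nth set0 E k then Some (w k) else None].

Definition XA {m : nat} (E : seq {set 'I_m}) (A : {set 'I_m}) (w : outcome E)
  : {ffun 'I_m -> option {ffun 'I_(size E) -> option bool}} :=
  [ffun i : 'I_m => if i \in A then Some (Xi E i w) else None].

Definition HX {m : nat} (E : seq {set 'I_m}) (A : {set 'I_m}) : R := entropy (XA E A).

Definition Delta {m : nat} (E : seq {set 'I_m}) (P : {set {set 'I_m}}) : R :=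
  ((rsum [seq HX E A | A <- enum P] - HX E setT) / (INR #|P| - 1)).

Definition admissible {m : nat} (P : {set {set 'I_m}}) : bool :=
  partition P [set: 'I_m] && (1 < #|P|)%N.

Definition minimizer {m : nat} (E : seq {set 'I_m}) (P : {set {set 'I_m}}) : Prop :=
  admissible P /\ forall Q, admissible Q -> Rle (Delta E P) (Delta E Q).

Definition unique_minimizer {m : nat} (E : seq {set 'I_m}) (P : {set {set 'I_m}}) : Prop :=
  minimizer E P /\ forall Q, minimizer E Q -> Q = P.

Definition singletons {m : nat} : {set {set 'I_m}} := [set [set i] | i : 'I_m].

Definition PB {m : nat} (B : {set 'I_m}) : {set {set 'I_m}} :=
  [set ~: B] :|: [set [set b] | b in B].

Definition PBcount {m : nat} (B : {set 'I_m}) (e : {set 'I_m}) : nat :=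
  #|[set C in PB B | C :&: e != set0]|.

Definition lhs {m : nat} t (E : seq {set 'I_m}) : R :=
  ((INR t - 1) * INR (size E) / (INR m - 1)).

Definition rhs {m : nat} (E : seq {set 'I_m}) (B : {set 'I_m}) : R :=
  (rsum [seq (INR (PBcount B e) - 1) | e <- E] / (INR #|PB B| - 1)).

(* Main.v *)
Require Import Defs.
From Stdlib Require Import Reals.
From mathcomp Require Import all_boot.
From Stdlib Require Import Lra Lia.
From mathcomp Require Import zify.
Local Open Scope R_scope.

Lemma rsum_const_in (T : eqType) (L : seq T) (g : T -> R) (a : R) :
  (forall v, v \in L -> g v = a) -> rsum [seq g v | v <- L] = (INR (size L) * a).
Proof.
elim: L => [|x L IH] H; first by rewrite /rsum /=; lra.
have -> : size (x :: L) = (size L).+1 by [].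
rewrite S_INR /rsum /= -/(rsum _) IH; last by move=> v Hv; apply: H; rewrite inE Hv orbT.
rewrite H ?inE ?eqxx //; lra.
Qed.

Lemma INR_expn (a n : nat) : INR (a ^ n) = (INR a ^ n)%R.
Proof.
elim: n => [|n IH]; first by rewrite expn0.
by rewrite expnS -multE mult_INR IH.
Qed.

Lemma entropy_uniform (Om : finType) (V : eqType) (f : Om -> V) (c n : nat) :
  (forall w, count (fun w' => f w' == f w) (enum Om) = c) ->
  #|Om| = (c * 2 ^ n)%N -> (0 < c)%N -> entropy f = INR n.
Proof.
move=> Hc Hcard Hc0.
set s := [seq f w | w <- enum Om].
have Hin : forall v, v \in undup s -> count (fun w => f w == v) (enum Om) = c.
  move=> v; rewrite mem_undup => /mapP [w _ ->]; exact: Hc.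
have Hsize : (size (undup s) * c = #|Om|)%N.
  have := perm_size (perm_count_undup s).
  rewrite size_map -cardE size_flatten /shape -map_comp.
  have -> : [seq (size \o (fun x => nseq (count_mem x s) x)) i | i <- undup s]
      = [seq c | i <- undup s].
    apply/eq_in_map => v Hv /=; rewrite size_nseq /s count_map; exact: Hin.
  have -> : forall l : seq V, [seq c | _ <- l] = nseq (size l) c by elim=> //= ? ? ->.
  by rewrite sumn_nseq mulnC.
have H2 : (0 < INR (2 ^ n)) by apply: lt_0_INR; apply/ltP; rewrite expn_gt0.
have Hc0R : (0 < INR c) by apply: lt_0_INR; apply/ltP.
rewrite /entropy (@rsum_const_in _ _ _ (INR n / INR (2 ^ n))).
  rewrite -/s.
  have E : INR (size (undup s)) * INR c = INR (2 ^ n) * INR c.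
    have := f_equal INR Hsize; rewrite Hcard -!multE !mult_INR; lra.
  have -> : INR (size (undup s)) = INR (2 ^ n).
    apply: (Rmult_eq_reg_r (INR c)); lra.
  field; lra.
move=> v Hv /=; rewrite Hin // Hcard -multE mult_INR.
have -> : (INR c / (INR c * INR (2 ^ n)) = / INR (2 ^ n)) by field; lra.
have h2 : INR 2 = 2 by simpl; lra.
rewrite /log2 ln_Rinv // INR_expn h2 ln_pow; last lra.
have hl : ln 2 <> 0 by have := ln_lt_2; lra.
rewrite -h2 -INR_expn.
field; split; try lra.
by rewrite h2.
Qed.
Local Close Scope R_scope.
Lemma count_enum_card (T : finType) (P : pred T) : count P (enum T) = #|P|.
Proof. by rewrite cardE -size_filter enumT. Qed.

Lemma fiber_card m (E : seq {set 'I_m}) (A : {set 'I_m}) (w : outcome E) :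
  #|[pred w' : outcome E | XA E A w' == XA E A w]| =
  2 ^ (size E - #|[set k : 'I_(size E) | A :&: nth set0 E k != set0]|).
Proof.
set K := [set k : 'I_(size E) | A :&: nth set0 E k != set0].
pose F := fun k : 'I_(size E) => if k \in K then pred1 (w k) else predT.
have -> : #|[pred w' : outcome E | XA E A w' == XA E A w]| = #|family F|.
  apply: eq_card => w' /=.
  apply/eqP/familyP => [Heq k | Hf].
    rewrite /F; case: ifP => // /[dup] kK; rewrite inE => /set0Pn [i].
    rewrite inE => /andP [iA ik].
    move/ffunP: Heq => /(_ i); rewrite !ffunE iA => -[] /ffunP /(_ k).
    by rewrite !ffunE ik => -[] ->; rewrite inE.
  apply/ffunP => i; rewrite !ffunE; case: ifP => // iA; congr Some.
  apply/ffunP => k; rewrite !ffunE; case: ifP => // ik; congr Some.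
  have : k \in K by rewrite inE; apply/set0Pn; exists i; rewrite inE iA ik.
  by move: (Hf k); rewrite /F => /[swap] -> /eqP.
rewrite card_family foldrE big_map big_enum /=.
rewrite (eq_bigr (fun k => if k \in K then 1 else 2)); last first.
  by move=> k _; rewrite /F; case: ifP => _; [rewrite card1 | rewrite card_bool].
rewrite (bigID (fun k => k \in K)) /= big1 ?mul1n; last by move=> k ->.
rewrite (eq_bigr (fun _ => 2)); last by move=> k /negbTE ->.
rewrite (eq_bigl (fun i => i \in ~: K)); last first.
  by move=> i; rewrite /= in_setC.
rewrite prod_nat_const; congr (2 ^ _).
have h := cardsC K; rewrite card_ord in h.
move: h; move: #|K| #|~: K| => a b h; by rewrite -h addKn.
Qed.

Local Open Scope R_scope.
Lemma HX_card m (E : seq {set 'I_m}) (A : {set 'I_m}) :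
  HX E A = INR #|[set k : 'I_(size E) | A :&: nth set0 E k != set0]|.
Proof.
rewrite /HX.
apply: (@entropy_uniform _ _ _ (2 ^ (size E - #|[set k : 'I_(size E) | A :&: nth set0 E k != set0]|)%N)).

- by move=> w; rewrite count_enum_card; exact: fiber_card.
- rewrite card_ffun card_bool card_ord -expnD subnK //.
  by have := max_card [set k : 'I_(size E) | A :&: nth set0 E k != set0]; rewrite card_ord.
- by rewrite expn_gt0.
Qed.

Local Close Scope R_scope.
Set Implicit Arguments.

Lemma card_in_sum (T : finType) (A : {pred T}) (p : pred T) :
  #|[set x in A | p x]| = \sum_(x in A) p x.
Proof.
rewrite -sum1_card big_mkcond [RHS]big_mkcond /=; apply: eq_bigr => x _.
by rewrite !inE; case: (x \in A); case: (p x).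
Qed.

Definition cnt {m} (P : {set {set 'I_m}}) (e : {set 'I_m}) : nat :=
  #|[set C in P | C :&: e != set0]|.

Lemma cntE m (P : {set {set 'I_m}}) e : cnt P e = \sum_(C in P) (C :&: e != set0).
Proof. exact: card_in_sum. Qed.

Lemma cardI_sum m (C e : {set 'I_m}) : #|C :&: e| = \sum_(x in e) (x \in C).
Proof.
by rewrite -card_in_sum; apply: eq_card => x; rewrite !inE andbC.
Qed.

Lemma sum_cells m (P : {set {set 'I_m}}) e : partition P [set: 'I_m] ->
  \sum_(C in P) #|C :&: e| = #|e|.
Proof.
move=> /and3P [/eqP cov triv _].
under eq_bigr => C _ do rewrite cardI_sum.
rewrite exchange_big /= -sum1_card; apply: eq_bigr => x _.
have xc : x \in cover P by rewrite cov inE.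
rewrite (bigD1 (pblock P x)) ?pblock_mem //= mem_pblock xc big1 //.
move=> C /andP [CP neq]; apply/eqP; rewrite eqb0; apply/negP => xC.
by move: neq; rewrite (def_pblock triv CP xC) eqxx.
Qed.

Lemma PB_notin m (B : {set 'I_m}) : ~: B \notin [set [set b] | b in B].
Proof.
apply/imsetP => -[b bB eq].
by have := set11 b; rewrite -eq inE bB.
Qed.

Lemma set1I m (i : 'I_m) e : ([set i] :&: e != set0) = (i \in e).
Proof.
case: (boolP (i \in e)) => ie.
  by apply/set0Pn; exists i; rewrite !inE eqxx ie.
apply/negbTE; rewrite negbK; apply/eqP/setP => x; rewrite !inE.
by case: eqP => // ->; rewrite (negbTE ie).
Qed.

Lemma cnt_PB m (B e : {set 'I_m}) :
  cnt (PB B) e = (~: B :&: e != set0) + #|B :&: e|.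
Proof.
rewrite cntE /PB big_setU1 ?PB_notin //= big_imset; last by move=> ? ? _ _; apply: set1_inj.
congr (_ + _); rewrite cardI_sum.
under eq_bigr => i _ do rewrite set1I.
by rewrite -!card_in_sum; apply: eq_card => x; rewrite !inE andbC.
Qed.

Lemma arith_le (t s k m N X Z : nat) : 0 < t -> 1 < k -> 0 < m ->
  (t-1)*s*Z + k*(s*(m-1)) <= X*(m-1) ->
  X + s*t = N + s*(k*t) -> Z + m = k*m ->
  (t-1)*s*(k-1) + s*(m-1) <= N*(m-1).
Proof.
case: t => // t _; case: k => // k _; case: m => // m _.
rewrite !subSS !subn0 => H1 H2 H3.
have H2' : (X + s*t.+1)*m = (N + s*(k.+1*t.+1))*m by rewrite H2.
have H3' : (Z + m.+1)*(t*s) = (k.+1*m.+1)*(t*s) by rewrite H3.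
nia.
Qed.

Lemma arith_lt (t s k m N X Z : nat) : 0 < t -> 1 < k -> 0 < m ->
  (t-1)*s*Z + k*(s*(m-1)) < X*(m-1) ->
  X + s*t = N + s*(k*t) -> Z + m = k*m ->
  (t-1)*s*(k-1) + s*(m-1) < N*(m-1).
Proof.
case: t => // t _; case: k => // k _; case: m => // m _.
rewrite !subSS !subn0 => H1 H2 H3.
have H2' : (X + s*t.+1)*m = (N + s*(k.+1*t.+1))*m by rewrite H2.
have H3' : (Z + m.+1)*(t*s) = (k.+1*m.+1)*(t*s) by rewrite H3.
nia.
Qed.

Definition NN {m} (E : seq {set 'I_m}) (P : {set {set 'I_m}}) : nat :=
  \sum_(e <- E) cnt P e.

Lemma card_PB m (B : {set 'I_m}) : #|PB B| = #|B| + 1.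
Proof.
by rewrite /PB cardsU1 PB_notin card_imset //; [rewrite addnC | apply: set1_inj].
Qed.

Lemma cnt_S m (e : {set 'I_m}) : cnt (@singletons m) e = #|e|.
Proof.
rewrite cntE /singletons big_imset /=; last by move=> ? ? _ _; apply: set1_inj.
under eq_bigr => i _ do rewrite set1I.
by rewrite -card_in_sum; apply: eq_card => x; rewrite !inE.
Qed.

Lemma card_S m : #|@singletons m| = m.
Proof. by rewrite card_imset ?card_ord //; apply: set1_inj. Qed.

Lemma cnt_PBC m (C e : {set 'I_m}) :
  cnt (PB (~: C)) e + #|C :&: e| = (C :&: e != set0) + #|e|.
Proof.
rewrite cnt_PB setCK -addnA; congr (_ + _).
by rewrite -(cardsID C e) addnC setDE (setIC e) (setIC e).
Qed.

Lemma cell_identity m (P : {set {set 'I_m}}) e : partition P [set: 'I_m] ->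
  \sum_(C in P) cnt (PB (~: C)) e + #|e| = cnt P e + #|P| * #|e|.
Proof.
move=> hP.
rewrite -{1}(@sum_cells _ P e hP) -big_split /=.
rewrite (eq_bigr _ (fun C _ => @cnt_PBC m C e)) big_split /= -cntE sum_nat_const.
by [].
Qed.

Lemma NN_identity m (P : {set {set 'I_m}}) (E : seq {set 'I_m}) (t : nat) :
  partition P [set: 'I_m] -> all (fun e : {set 'I_m} => #|e| == t) E ->
  \sum_(C in P) NN E (PB (~: C)) + size E * t = NN E P + size E * (#|P| * t).
Proof.
move=> hP; rewrite /NN exchange_big /=.
elim: E => [|e E IH] /=; first by rewrite !big_nil.
move=> /andP[/eqP et /IH]; rewrite !big_cons => IH'.
have := @cell_identity _ P e hP; rewrite et.
move=> h; rewrite !mulSn addnACA h IH' addnACA.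
done.
Qed.

Lemma singleton_cell m (C : {set 'I_m}) (E : seq {set 'I_m}) (t : nat) :
  #|C| = 1 -> all (fun e : {set 'I_m} => #|e| == t) E -> NN E (PB (~: C)) = size E * t.
Proof.
move=> hC; rewrite /NN.
elim: E => [|e E IH] /=; first by rewrite big_nil.
move=> /andP[/eqP et /IH]; rewrite big_cons => ->.
have := @cnt_PBC _ C e.
have : #|C :&: e| <= 1 by rewrite -hC; apply/subset_leq_card/subsetIl.
rewrite -card_gt0 et; case: #|C :&: e| => [|[|]] //=; lia.
Qed.

Lemma cell_card m (P : {set {set 'I_m}}) C : partition P [set: 'I_m] -> C \in P ->
  0 < #|C| <= m.
Proof.
move=> /and3P [_ _ h0] CP; apply/andP; split.
  by rewrite card_gt0; apply: contraNneq h0 => <-.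
by have := max_card C; rewrite card_ord.
Qed.

Lemma core_sums m (P : {set {set 'I_m}}) (E : seq {set 'I_m}) (t : nat) :
  partition P [set: 'I_m] ->
  \sum_(C in P) ((t-1)*size E*(m - #|C|) + size E*(m-1))
   = (t-1)*size E*(\sum_(C in P) (m - #|C|)) + #|P| * (size E * (m-1))
  /\ \sum_(C in P) (m - #|C|) + m = #|P| * m.
Proof.
move=> hP; split; first by rewrite big_split /= -big_distrr sum_nat_const.
have hm := card_partition hP; rewrite cardsT card_ord in hm.
have : \sum_(C in P) (m - #|C|) + \sum_(C in P) #|C| = #|P| * m.
  rewrite -big_split /= -sum_nat_const; apply: eq_bigr => C CP.
  by have /andP[_ h] := cell_card hP CP; rewrite subnK.
by rewrite -hm.
Qed.

Lemma core_le m (P : {set {set 'I_m}}) (E : seq {set 'I_m}) (t : nat) :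
  0 < m -> partition P [set: 'I_m] -> 1 < #|P| -> 0 < t -> all (fun e : {set 'I_m} => #|e| == t) E ->
  (forall C, C \in P -> 1 < #|C| ->
     (t-1)*size E*(m - #|C|) + size E*(m-1) <= NN E (PB (~: C))*(m-1)) ->
  (t-1)*size E*(#|P| - 1) + size E*(m-1) <= NN E P*(m-1).
Proof.
move=> hm hP hk ht hE H.
have cellb : forall C, C \in P ->
    (t-1)*size E*(m-#|C|) + size E*(m-1) <= NN E (PB (~:C))*(m-1).
  move=> C CP; case: (ltnP 1 #|C|) => hC; first exact: H.
  have /andP[h1 _] := cell_card hP CP.
  have hC1 : #|C| = 1 by lia.
  rewrite (@singleton_cell _ C E t hC1 hE) hC1.
  case: t ht {H hE} => // t _; rewrite subSS subn0; nia.
have Hs : \sum_(C in P) ((t-1)*size E*(m-#|C|) + size E*(m-1))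
        <= \sum_(C in P) (NN E (PB (~:C))*(m-1)) by apply: leq_sum.
rewrite -big_distrl /= in Hs.
have [e1 e2] := @core_sums _ P E t hP; rewrite e1 in Hs.
have e3 := @NN_identity _ P E t hP hE.
move: Hs e2 e3.
set X := \sum_(C in P) NN E (PB (~: C)).
set Z := \sum_(C in P) (m - #|C|).
move=> Hs e2 e3.
exact: (@arith_le t (size E) #|P| m (NN E P) X Z ht hk hm Hs e3 e2).
Qed.

Lemma core_lt m (P : {set {set 'I_m}}) (E : seq {set 'I_m}) (t : nat) C0 :
  0 < m -> partition P [set: 'I_m] -> 1 < #|P| -> 0 < t -> all (fun e : {set 'I_m} => #|e| == t) E ->
  C0 \in P -> 1 < #|C0| ->
  (forall C, C \in P -> 1 < #|C| ->
     (t-1)*size E*(m - #|C|) + size E*(m-1) < NN E (PB (~: C))*(m-1)) ->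
  (t-1)*size E*(#|P| - 1) + size E*(m-1) < NN E P*(m-1).
Proof.
move=> hm hP hk ht hE C0P hC0 H.
have cellb : forall C, C \in P ->
    (t-1)*size E*(m-#|C|) + size E*(m-1) <= NN E (PB (~:C))*(m-1).
  move=> C CP; case: (ltnP 1 #|C|) => hC; first exact: ltnW (H _ CP hC).
  have /andP[h1 _] := cell_card hP CP.
  have hC1 : #|C| = 1 by lia.
  rewrite (@singleton_cell _ C E t hC1 hE) hC1.
  case: t ht {H hE} => // t _; rewrite subSS subn0; nia.
have Hs : \sum_(C in P) ((t-1)*size E*(m-#|C|) + size E*(m-1))
        < \sum_(C in P) (NN E (PB (~:C))*(m-1)).
  rewrite (bigD1 C0) //= [X in _ < X](bigD1 C0) //=.
  have h1 := H _ C0P hC0.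
  have h2 : \sum_(C in P | C != C0) ((t-1)*size E*(m-#|C|) + size E*(m-1))
         <= \sum_(C in P | C != C0) (NN E (PB (~:C))*(m-1)).
    by apply: leq_sum => C /andP[CP _]; apply: cellb.
  exact: leq_add h1 h2.
rewrite -big_distrl /= in Hs.
have [e1 e2] := @core_sums _ P E t hP; rewrite e1 in Hs.
have e3 := @NN_identity _ P E t hP hE.
move: Hs e2 e3.
set X := \sum_(C in P) NN E (PB (~: C)).
set Z := \sum_(C in P) (m - #|C|).
move=> Hs e2 e3.
exact: (@arith_lt t (size E) #|P| m (NN E P) X Z ht hk hm Hs e3 e2).
Qed.

Lemma adm_PB m (B : {set 'I_m}) : 0 < #|B| -> 0 < #|~: B| -> admissible (PB B).
Proof.
move=> hB hBc; rewrite /admissible card_PB addn1 ltnS hB andbT.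
have cov : cover (PB B) = [set: 'I_m].
  apply/setP => x; rewrite inE; apply/bigcupP.
  case: (boolP (x \in B)) => xB.
    exists [set x]; last by rewrite inE.
    by rewrite /PB; apply/setU1P; right; apply: imset_f.
  exists (~: B); last by rewrite inE.
  by rewrite /PB; apply/setU1P; left.
apply/and3P; split.
- by rewrite cov.
- rewrite /trivIset cov /PB big_setU1 ?PB_notin //=.
  rewrite big_imset; last by move=> ? ? _ _; apply: set1_inj.
  rewrite (eq_bigr (fun _ => 1)); last by move=> i _; rewrite cards1.
  by rewrite sum1_card addnC cardsC cardsT.
- rewrite /PB !inE negb_or; apply/andP; split.
    by rewrite eq_sym -cards_eq0 -lt0n.
  apply/imsetP => -[b _ h]; have := set11 b; by rewrite -h inE.
Qed.

Lemma adm_S m : 1 < m -> admissible (@singletons m).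
Proof.
move=> hm; rewrite /admissible card_S hm andbT.
have cov : cover (@singletons m) = [set: 'I_m].
  apply/setP => x; rewrite inE; apply/bigcupP.
  by exists [set x]; rewrite ?inE //; apply: imset_f.
apply/and3P; split.
- by rewrite cov.
- rewrite /trivIset cov /singletons big_imset; last by move=> ? ? _ _; apply: set1_inj.
  rewrite (eq_bigr (fun _ => 1)); last by move=> i _; rewrite cards1.
  by rewrite sum1_card cardsT.
- by apply/imsetP => -[b _ h]; have := set11 b; rewrite -h inE.
Qed.

Lemma small_S m (Q : {set {set 'I_m}}) : partition Q [set: 'I_m] ->
  (forall C, C \in Q -> #|C| <= 1) -> Q = @singletons m.
Proof.
move=> hQ hs; apply/setP => C; apply/idP/idP => [CQ | /imsetP [x _ ->]].
  have /andP[h0 _] := cell_card hQ CQ.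
  have : #|C| == 1 by rewrite eqn_leq h0 hs.
  by move=> /cards1P [x ->]; apply: imset_f.
have /and3P [/eqP cov _ _] := hQ.
have xc : x \in cover Q by rewrite cov inE.
have hpb := pblock_mem xc.
have : #|pblock Q x| == 1 by rewrite eqn_leq hs // card_gt0; apply/set0Pn; exists x; rewrite mem_pblock.
move=> /cards1P [y hy]; move: (xc); rewrite -mem_pblock hy inE => /eqP xy.
by rewrite {1}xy -hy.
Qed.

Lemma cell_lt m (Q : {set {set 'I_m}}) C : partition Q [set: 'I_m] -> 1 < #|Q| ->
  C \in Q -> #|C| < m.
Proof.
move=> hQ hk CQ.
have : 0 < #|Q :\ C| by move: hk; rewrite (cardsD1 C) CQ.
rewrite card_gt0 => /set0Pn [D]; rewrite !inE => /andP [DC DQ].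
have /and3P [_ triv _] := hQ.
have /andP[h0 _] := cell_card hQ DQ.
move: h0; rewrite card_gt0 => /set0Pn [x xD].
move/trivIsetP: triv => triv.
have := triv D C DQ CQ DC; move=> /disjoint_setI0 hI.
have xC : x \notin C.
  apply/negP => xC; have : x \in D :&: C by rewrite inE xC xD.
  by rewrite hI inE.
have : C \proper [set: 'I_m] by rewrite properT; apply: contraNneq xC => ->; rewrite inE.
by move/proper_card; rewrite cardsT card_ord.
Qed.

Unset Implicit Arguments.
Local Open Scope R_scope.

Lemma INR_addn a b : INR (a + b) = INR a + INR b.
Proof. by rewrite -plusE plus_INR. Qed.
Lemma INR_muln a b : INR (a * b) = INR a * INR b.
Proof. by rewrite -multE mult_INR. Qed.
Lemma INR_subn1 a : (0 < a)%N -> INR (a - 1) = INR a - 1.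
Proof. by case: a => // a _; rewrite subSS subn0 S_INR; lra. Qed.

Lemma rsum_INR (T : Type) (l : seq T) (f : T -> nat) :
  rsum [seq INR (f x) | x <- l] = INR (\sum_(x <- l) f x).
Proof.
elim: l => [|x l IH]; first by rewrite big_nil.
by rewrite big_cons INR_addn -IH.
Qed.

Lemma rsum_sub1 (T : Type) (l : seq T) (f : T -> nat) :
  rsum [seq INR (f x) - 1 | x <- l] = INR (\sum_(x <- l) f x) - INR (size l).
Proof.
elim: l => [|x l IH]; first by rewrite big_nil /rsum /=; lra.
have -> : size (x :: l) = (size l).+1 by [].
rewrite S_INR big_cons INR_addn /rsum /= -/(rsum _) IH; lra.
Qed.

Lemma card_sum (T : finType) (p : pred T) : #|[set x | p x]| = \sum_x p x.
Proof.
rewrite -sum1_card big_mkcond /=; apply: eq_bigr => x _.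
by rewrite !inE; case: (p x).
Qed.

Lemma sumHX m (E : seq {set 'I_m}) (P : {set {set 'I_m}}) :
  rsum [seq HX E A | A <- enum P] = INR (NN E P).
Proof.
rewrite (eq_map (fun A => @HX_card m E A)) rsum_INR big_enum /=.
under eq_bigr => A _ do rewrite card_sum.
rewrite exchange_big /= /NN (big_nth set0) big_mkord.
by congr INR; apply: eq_bigr => k _; rewrite cntE.
Qed.

Lemma HX_T m (E : seq {set 'I_m}) (t : nat) : (0 < t)%N ->
  all (fun e : {set 'I_m} => #|e| == t) E -> HX E [set: 'I_m] = INR (size E).
Proof.
move=> ht hE; rewrite HX_card.
have -> : [set k : 'I_(size E) | [set: 'I_m] :&: nth set0 E k != set0] = [set: 'I_(size E)].
  apply/setP => k; rewrite !inE setTI -cards_eq0.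
  have /allP /(_ _ (mem_nth set0 (ltn_ord k))) /eqP -> := hE.
  by rewrite -lt0n.
by rewrite cardsT card_ord.
Qed.

Lemma DeltaE m (E : seq {set 'I_m}) (t : nat) (P : {set {set 'I_m}}) : (0 < t)%N ->
  all (fun e : {set 'I_m} => #|e| == t) E ->
  Defs.Delta E P = (INR (NN E P) - INR (size E)) / (INR #|P| - 1).
Proof. by move=> ht hE; rewrite /Defs.Delta sumHX (@HX_T m E t ht hE). Qed.

Lemma NN_S m (E : seq {set 'I_m}) (t : nat) :
  all (fun e : {set 'I_m} => #|e| == t) E -> NN E (@singletons m) = (size E * t)%N.
Proof.
rewrite /NN; elim: E => [|e E IH] /=; first by rewrite big_nil.
move=> /andP [/eqP et /IH]; rewrite big_cons cnt_S et => ->.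
by rewrite mulSn.
Qed.

Lemma rhsE m (E : seq {set 'I_m}) B :
  rhs E B = (INR (NN E (PB B)) - INR (size E)) / (INR #|PB B| - 1).
Proof. by rewrite /rhs rsum_sub1. Qed.

Lemma cmp_le (s t m k N : nat) : (0 < t)%N -> (1 < m)%N -> (1 < k)%N ->
  ((INR (s * t) - INR s) / (INR m - 1) <= (INR N - INR s) / (INR k - 1) <->
   ((t-1)*s*(k-1) + s*(m-1) <= N*(m-1))%N).
Proof.
move=> ht hm hk.
have hm' : 1 < INR m by apply: (lt_INR 1); apply/ltP.
have hk' : 1 < INR k by apply: (lt_INR 1); apply/ltP.
have eqL : INR ((t-1)*s*(k-1) + s*(m-1)) =
   (INR (s * t) - INR s) * (INR k - 1) + INR s * (INR m - 1).
  rewrite INR_addn !INR_muln !INR_subn1 //; [ring | lia | lia].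
have eqR : INR (N*(m-1)) = (INR N - INR s) * (INR m - 1) + INR s * (INR m - 1).
  rewrite INR_muln INR_subn1; [ring | lia].
split => H.
- apply/leP/INR_le; rewrite eqL eqR.
  apply: Rplus_le_compat_r.
  have := Rmult_le_compat_r ((INR m - 1) * (INR k - 1)) _ _ ltac:(nra) H.
  have e1 : (INR (s * t) - INR s) / (INR m - 1) * ((INR m - 1) * (INR k - 1)) =
            (INR (s * t) - INR s) * (INR k - 1) by field; lra.
  have e2 : (INR N - INR s) / (INR k - 1) * ((INR m - 1) * (INR k - 1)) =
            (INR N - INR s) * (INR m - 1) by field; lra.
  lra.
- move/leP/le_INR: H; rewrite eqL eqR => H.
  have H' : (INR (s * t) - INR s) * (INR k - 1) <= (INR N - INR s) * (INR m - 1) by lra.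
  apply: (Rmult_le_reg_r ((INR m - 1) * (INR k - 1))); first nra.
  have e1 : (INR (s * t) - INR s) / (INR m - 1) * ((INR m - 1) * (INR k - 1)) =
            (INR (s * t) - INR s) * (INR k - 1) by field; lra.
  have e2 : (INR N - INR s) / (INR k - 1) * ((INR m - 1) * (INR k - 1)) =
            (INR N - INR s) * (INR m - 1) by field; lra.
  lra.
Qed.

Lemma cmp_lt (s t m k N : nat) : (0 < t)%N -> (1 < m)%N -> (1 < k)%N ->
  ((INR (s * t) - INR s) / (INR m - 1) < (INR N - INR s) / (INR k - 1) <->
   ((t-1)*s*(k-1) + s*(m-1) < N*(m-1))%N).
Proof.
move=> ht hm hk.
have hm' : 1 < INR m by apply: (lt_INR 1); apply/ltP.
have hk' : 1 < INR k by apply: (lt_INR 1); apply/ltP.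
have eqL : INR ((t-1)*s*(k-1) + s*(m-1)) =
   (INR (s * t) - INR s) * (INR k - 1) + INR s * (INR m - 1).
  rewrite INR_addn !INR_muln !INR_subn1 //; [ring | lia | lia].
have eqR : INR (N*(m-1)) = (INR N - INR s) * (INR m - 1) + INR s * (INR m - 1).
  rewrite INR_muln INR_subn1; [ring | lia].
have e1 : (INR (s * t) - INR s) / (INR m - 1) * ((INR m - 1) * (INR k - 1)) =
          (INR (s * t) - INR s) * (INR k - 1) by field; lra.
have e2 : (INR N - INR s) / (INR k - 1) * ((INR m - 1) * (INR k - 1)) =
          (INR N - INR s) * (INR m - 1) by field; lra.
split => H.
- apply/ltP/INR_lt; rewrite eqL eqR.
  apply: Rplus_lt_compat_r.
  have := Rmult_lt_compat_r ((INR m - 1) * (INR k - 1)) _ _ ltac:(nra) H.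
  lra.
- move/ltP/lt_INR: H; rewrite eqL eqR => H.
  apply: (Rmult_lt_reg_r ((INR m - 1) * (INR k - 1))); first nra.
  lra.
Qed.

Theorem corollary2_aux (m t : nat) (E : seq {set 'I_m}) :
  (3 <= m)%N -> (0 < t)%N -> all (fun e : {set 'I_m} => #|e| == t) E ->
  (minimizer E (@singletons m) <->
     (forall B : {set 'I_m}, (1 <= #|B| <= m - 2)%N -> Rle (lhs t E) (rhs E B)))
  /\
  (unique_minimizer E (@singletons m) <->
     (forall B : {set 'I_m}, (1 <= #|B| <= m - 2)%N -> Rlt (lhs t E) (rhs E B))).
Proof.
move=> hm ht hE.
have hm1 : (1 < m)%N by lia.
have DS : Defs.Delta E (@singletons m) = (INR (size E * t) - INR (size E)) / (INR m - 1).
  by rewrite (@DeltaE m E t _ ht hE) (@NN_S m E t hE) card_S.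
have lhsE : lhs t E = Defs.Delta E (@singletons m).
  have hm' : 1 < INR m by apply: (lt_INR 1); apply/ltP.
  rewrite DS /lhs INR_muln; field; lra.
have rhsD : forall B, rhs E B = Defs.Delta E (PB B).
  by move=> B; rewrite rhsE (@DeltaE m E t _ ht hE).
have cmpQ : forall Q : {set {set 'I_m}}, (1 < #|Q|)%N ->
    (Defs.Delta E (@singletons m) <= Defs.Delta E Q <->
     ((t-1)*size E*(#|Q| - 1) + size E*(m-1) <= NN E Q*(m-1))%N).
  by move=> Q hQ; rewrite DS (@DeltaE m E t _ ht hE); apply: cmp_le.
have cmpQ' : forall Q : {set {set 'I_m}}, (1 < #|Q|)%N ->
    (Defs.Delta E (@singletons m) < Defs.Delta E Q <->
     ((t-1)*size E*(#|Q| - 1) + size E*(m-1) < NN E Q*(m-1))%N).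
  by move=> Q hQ; rewrite DS (@DeltaE m E t _ ht hE); apply: cmp_lt.
have cardC : forall B : {set 'I_m}, #|~: B| = (m - #|B|)%N.
  by move=> B; have h := cardsC B; rewrite card_ord in h; lia.
have admB : forall B : {set 'I_m}, (1 <= #|B| <= m - 2)%N -> admissible (PB B).
  move=> B /andP [h1 h2]; apply: adm_PB => //; rewrite cardC; lia.
have cellB : forall Q : {set {set 'I_m}}, admissible Q -> forall C, C \in Q -> (1 < #|C|)%N ->
    (1 <= #|~: C| <= m - 2)%N /\ (#|PB (~: C)| - 1 = m - #|C|)%N /\ (1 < #|PB (~: C)|)%N.
  move=> Q /andP [hQ hk] C CQ hC.
  have := cell_lt hQ hk CQ; rewrite card_PB cardC => hCm.
  split; first by apply/andP; split; lia.
  by rewrite addnK; split => //; rewrite addn1 ltnS subn_gt0.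
have aR : (forall B : {set 'I_m}, (1 <= #|B| <= m - 2)%N -> Rle (lhs t E) (rhs E B)) ->
    minimizer E (@singletons m).
  move=> H; split; first exact: adm_S.
  move=> Q /[dup] hQa /andP [hQ hk]; apply/(cmpQ Q hk).
  apply: core_le => // [|C CQ hC]; first lia.
  have [hB [hc hk']] := cellB Q hQa C CQ hC.
  have := H _ hB; rewrite lhsE rhsD => /(cmpQ _ hk').
  by rewrite hc.
split.
  split; last exact: aR.
  by move=> [_ Hmin] B hB; rewrite lhsE rhsD; apply: Hmin; apply: admB.
split.
  move=> [[_ Hmin] Huniq] B hB; rewrite lhsE rhsD; apply: Rnot_le_lt => hle.
  have eqS : PB B = @singletons m.
    apply: Huniq; split; first exact: admB.
    by move=> Q hQ; apply: Rle_trans hle (Hmin Q hQ).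
  have : ~: B \in PB B by rewrite /PB; apply/setU1P; left.
  rewrite eqS => /imsetP [x _ hx].
  have := cardC B; rewrite hx cards1.
  by move/andP: hB => [h1 h2]; lia.
move=> H.
have minS : minimizer E (@singletons m).
  by apply: aR => B hB; apply: Rlt_le; apply: H.
split => // Q [/[dup] hQa /andP [hQ hk] HQ].
case: (boolP [exists C in Q, (1 < #|C|)%N]) => [/existsP [C0 /andP [C0Q hC0]] | hno].
  have : Defs.Delta E (@singletons m) < Defs.Delta E Q.
    apply/(cmpQ' Q hk); apply: (@core_lt m Q E t C0) => // [|C CQ hC]; first lia.
    have [hB [hc hk']] := cellB Q hQa C CQ hC.
    have := H _ hB; rewrite lhsE rhsD => /(cmpQ' _ hk').
    by rewrite hc.
  have := HQ _ (@adm_S m hm1); lra.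
apply: small_S => // C CQ; rewrite leqNgt; apply: contra hno => h.
by apply/existsP; exists C; rewrite CQ h.
Qed.

Local Close Scope R_scope.

Theorem corollary2 (m t : nat) (E : seq {set 'I_m}) :
  3 <= m -> 0 < t -> all (fun e : {set 'I_m} => #|e| == t) E ->
  (minimizer E (@singletons m) <->
     (forall B : {set 'I_m}, 1 <= #|B| <= m - 2 -> Rle (lhs t E) (rhs E B)))
  /\
  (unique_minimizer E (@singletons m) <->
     (forall B : {set 'I_m}, 1 <= #|B| <= m - 2 -> Rlt (lhs t E) (rhs E B))).
Proof. exact: corollary2_aux. Qed.
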